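(* Let $A\in\mathbb{R}^{n\times n}$, $B\in\mathbb{R}^{n\times m}$ with $(A,B)$ controllable, and let $T>0$. If $\ker(B^\top\widetilde{A}_T^\top)\cap\ker(B^\top)=\{0\}$, then the pair $\big(A_{d,T},\,[B_{d,T}\ \ B_{i,T}]\big)$ is controllable.
   Context: For $T>0$ define $\widetilde{A}_T:=\int_0^T e^{A\tau}\,d\tau$, $A_{d,T}:=e^{AT}$, $B_{d,T}:=\widetilde{A}_T B$, $B_{i,T}:=A_{d,T}B$. *)

(* Defs.v *)
From HB Require Import structures.
From mathcomp Require Import all_boot all_order all_algebra.
From mathcomp Require Import all_classical all_reals all_analysis.
Set Implicit Arguments. Unset Strict Implicit. Unset Printing Implicit Defensive.
Import Order.TTheory GRing.Theory Num.Theory.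
Import numFieldNormedType.Exports.
Local Open Scope classical_set_scope.
Local Open Scope ring_scope.

Definition expmx (R : realType) (n : nat) (A : 'M[R]_n) (t : R) : 'M[R]_n :=
  limn (series (fun k : nat => (t ^+ k / (k`!)%:R) *: (A ^+ k))).

Definition Atilde (R : realType) (n : nat) (A : 'M[R]_n) (T : R) : 'M[R]_n :=
  \matrix_(i, j) Rintegral lebesgue_measure `[0, T] (fun tau => expmx A tau i j).

Definition ctrb_mx (R : fieldType) (n m : nat) (A : 'M[R]_n) (B : 'M[R]_(n, m))
  : 'M[R]_(n, \sum_(i < n) m) :=
  \mxrow_(i < n) (A ^+ i *m B).

Definition controllable (R : fieldType) (n m : nat) (A : 'M[R]_n) (B : 'M[R]_(n, m))
  : Prop := \rank (ctrb_mx A B) = n.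

(* Main.v *)
Require Import Defs.
From HB Require Import structures.
From mathcomp Require Import all_boot all_order all_algebra.
From mathcomp Require Import all_classical all_reals all_analysis.
Import Order.TTheory GRing.Theory Num.Theory.
Local Open Scope ring_scope.

Module Helpers.
Local Open Scope classical_set_scope.
Local Open Scope ring_scope.
Set Implicit Arguments. Unset Strict Implicit. Unset Printing Implicit Defensive.
Import numFieldNormedType.Exports.
From mathcomp Require Import ring.

Lemma horner_mx_sum (F : comNzRingType) n' (M : 'M[F]_n'.+1) (p : {poly F}) k :
  (size p <= k)%N -> horner_mx M p = \sum_(j < k) p`_j *: M ^+ j.
Proof.
move=> Hs.
have E : p = \poly_(j < k) p`_j.
  apply/polyP => i; rewrite coef_poly; case: ltnP => // ki.
  by rewrite nth_default // (leq_trans Hs ki).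
rewrite {1}E poly_def linear_sum; apply: eq_bigr => j _.
by rewrite linearZ /= rmorphXn /= horner_mx_X.
Qed.


HB.instance Definition _ (R : realType) (m n : nat) := Complete.on 'M[R]_(m,n).

Section B.
Variable R : realType.

Lemma mx_entry_le m n (M : 'M[R]_(m, n)) i j : `|M i j| <= `|M|.
Proof.
rewrite [X in _ <= X]/Num.norm /= mx_normrE.
by apply/bigmax_geP; right; exists (i, j).
Qed.

Lemma mx_norm_le m n (M : 'M[R]_(m, n)) c :
  0 <= c -> (forall i j, `|M i j| <= c) -> `|M| <= c.
Proof.
move=> c0 H; rewrite [X in X <= _]/Num.norm /= mx_normrE.
by apply/bigmax_leP; split => // -[i j] _; exact: H.
Qed.

Lemma mx_norm_mul m n p (P : 'M[R]_(m, n)) (Q : 'M[R]_(n, p)) :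
  `|P *m Q| <= n%:R * `|P| * `|Q|.
Proof.
apply: mx_norm_le; first by rewrite !mulr_ge0.
move=> i j; rewrite mxE; apply: le_trans (ler_norm_sum _ _ _) _.
apply: le_trans (_ : \sum_(l < n) `|P| * `|Q| <= _).
  apply: ler_sum => l _; rewrite normrM.
  by apply: ler_pM => //; exact: mx_entry_le.
by rewrite sumr_const card_ord -mulrA mulr_natl.
Qed.

Lemma mx_norm_exp n (A : 'M[R]_n.+1) k : `|A ^+ k| <= (n.+1%:R * `|A|) ^+ k.
Proof.
elim: k => [|k IH].
  rewrite expr0 expr0; apply: mx_norm_le => // i j.
  by rewrite mxE; case: (i == j) => /=; rewrite ?normr1 ?normr0.
rewrite exprSr -mulmxE (le_trans (mx_norm_mul _ _)) // exprSr mulrA.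
by rewrite ler_wpM2r // mulrC ler_wpM2r.
Qed.


Definition eterm n (A : 'M[R]_n) (t : R) := fun k : nat => (t ^+ k / (k`!)%:R) *: A ^+ k.

Lemma expmx_cvg n (A : 'M[R]_n.+1) t : cvgn (series (eterm A t)).
Proof.
apply: normed_cvg.
apply: (@series_le_cvg _ _ (exp_coeff (`|t| * (n.+1%:R * `|A|)))).
- by move=> k /=.
- by move=> k; apply: exp_coeff_ge0; rewrite !mulr_ge0.
- move=> k; rewrite /eterm /exp_coeff /= normrZ normrM normfV normrX.
  rewrite [`|(k`!)%:R|]ger0_norm // exprMn mulrAC.
  by apply: ler_wpM2r; [rewrite invr_ge0 | apply: ler_wpM2l; [rewrite exprn_ge0|apply: mx_norm_exp]].
- exact: is_cvg_series_exp_coeff.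
Qed.

Lemma fact_neq0 k : (k`!)%:R != 0 :> R.
Proof. by rewrite pnatr_eq0 -lt0n fact_gt0. Qed.

Lemma sum_binom (a b : R) j :
  \sum_(i < j.+1) ((b ^+ i / (i`!)%:R) * (a ^+ (j - i) / ((j - i)`!)%:R))
  = (a + b) ^+ j / (j`!)%:R.
Proof.
rewrite exprDn mulr_suml; apply: eq_bigr => i _.
have hi : (i <= j)%N by rewrite -ltnS ltn_ord.
have hC : ('C(j, i))%:R = (j`!)%:R / ((i`!)%:R * ((j - i)`!)%:R) :> R.
  by rewrite -(bin_fact hi) !natrM mulfK // mulf_neq0 // fact_neq0.
rewrite -[_ *+ 'C(j, i)]mulr_natr hC.
have := fact_neq0 i; have := fact_neq0 (j - i); have := fact_neq0 j.
move=> h1 h2 h3; field.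
by rewrite h1 h2 h3.
Qed.


Definition ppoly (t : R) N : {poly R} := \poly_(k < N) (t ^+ k / (k`!)%:R).

Lemma series_horner n (A : 'M[R]_n.+1) t N :
  series (eterm A t) N = horner_mx A (ppoly t N).
Proof.
rewrite (horner_mx_sum A (size_poly _ _)) /series /= big_mkord.
by apply: eq_bigr => k _; rewrite coef_poly ltn_ord.
Qed.

Lemma etermN n (A : 'M[R]_n.+1) t : eterm (-A) t = eterm A (-t).
Proof.
apply/funext => k; rewrite /eterm [(- t) ^+ k]exprNn -scaleN1r exprZn scalerA.
by rewrite mulrC mulrA.
Qed.

Lemma coef_ppoly_le t N k : `|(ppoly t N)`_k| <= `|t| ^+ k / (k`!)%:R.
Proof.
rewrite coef_poly; case: ifP => _; last by rewrite normr0 divr_ge0 ?exprn_ge0.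
by rewrite normrM normfV normrX [`|(k`!)%:R|]ger0_norm.
Qed.

Lemma coef_pq t N j : (j < N)%N -> (ppoly t N * ppoly (-t) N)`_j = (j == 0)%:R.
Proof.
move=> jN; rewrite coefM.
transitivity (\sum_(i < j.+1) ((t ^+ i / (i`!)%:R) * ((-t) ^+ (j - i) / ((j - i)`!)%:R))).
  apply: eq_bigr => i _; rewrite !coef_poly.
  have hi : (i <= j)%N by rewrite -ltnS ltn_ord.
  by rewrite (leq_ltn_trans hi jN) (leq_ltn_trans (leq_subr _ _) jN).
rewrite sum_binom addNr expr0n; case: j {jN} => [|j] /=.
  by rewrite divr1.
by rewrite mul0r.
Qed.

Lemma coef_pq_le t N j :
  `|(ppoly t N * ppoly (-t) N)`_j| <= (`|t| + `|t|) ^+ j / (j`!)%:R.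
Proof.
rewrite coefM -sum_binom; apply: le_trans (ler_norm_sum _ _ _) _.
apply: ler_sum => i _; rewrite normrM; apply: ler_pM => //.
  exact: coef_ppoly_le.
by rewrite -(normrN t); exact: coef_ppoly_le.
Qed.

Lemma hornerB_le n (A : 'M[R]_n.+1) t N : (0 < N)%N ->
  `|horner_mx A (ppoly t N * ppoly (-t) N - 1)| <=
  \sum_(j < N.*2) (if (N <= j)%N then
      exp_coeff ((`|t| + `|t|) * (n.+1%:R * `|A|)) j else 0).
Proof.
move=> N0.
have Hs : (size (ppoly t N * ppoly (-t) N - 1)%R <= N.*2)%N.
  apply: leq_trans (size_polyD _ _) _.
  rewrite geq_max size_polyN size_poly1 -addnn; apply/andP; split.
    apply: leq_trans (size_mul_leq _ _) _; apply: leq_trans (leq_pred _) _.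
    exact: leq_add (size_poly _ _) (size_poly _ _).
  exact: leq_trans N0 (leq_addr _ _).
rewrite (horner_mx_sum A Hs); apply: le_trans (ler_norm_sum _ _ _) _.
apply: ler_sum => j _; rewrite normrZ coefB coef1.
case: leqP => Nj.
  have j0 : (j == 0 :> nat) = false by apply/negbTE; rewrite -lt0n (leq_trans N0 Nj).
  rewrite j0 subr0 /exp_coeff /= exprMn mulrAC.
  apply: ler_pM => //; first exact: coef_pq_le.
  exact: mx_norm_exp.
by rewrite coef_pq // subrr normr0 mul0r.
Qed.

Lemma sum_tail (f : nat -> R) N : (forall k, 0 <= f k) -> cvgn (series f) ->
  \sum_(j < N.*2) (if (N <= j)%N then f j else 0) <= limn (series f) - series f N.
Proof.
move=> f0 cf.
have NN : (N <= N.*2)%N by rewrite -addnn leq_addr.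
rewrite -(big_mkord xpredT (fun j => if (N <= j)%N then f j else 0)).
rewrite (big_cat_nat (leq0n N) NN) /=.
rewrite big_nat_cond big1 ?add0r => [|i /andP[/andP[_ iN] _]]; last first.
  by rewrite leqNgt iN.
have -> : \sum_(N <= i < N.*2) (if (N <= i)%N then f i else 0) = series f N.*2 - series f N.
  rewrite /series /= (big_cat_nat (leq0n N) NN) /= addrC addrK.
  by apply: eq_big_nat => i /andP[-> _].
apply: lerB => //; apply: nondecreasing_cvgn_le => //.
by apply/nondecreasing_seqP => k; rewrite -subr_ge0 seriesSB.
Qed.

Lemma tail_cvg0 (f : nat -> R) : cvgn (series f) ->
  (fun N => limn (series f) - series f N) @ \oo --> 0.
Proof.
move=> cf; rewrite -(subrr (limn (series f))); apply: cvgB => //; exact: cvg_cst.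
Qed.


Lemma prod_cvg1 n (A : 'M[R]_n.+1) t :
  (fun N => series (eterm A t) N *m series (eterm (-A) t) N) @ \oo --> (1%:M : 'M[R]_n.+1).
Proof.
set x := (`|t| + `|t|) * (n.+1%:R * `|A|).
apply/subr_cvg0/norm_cvg0P.
apply: (@squeeze_cvgr _ _ _ _ (fun=> 0) (fun N => limn (series (exp_coeff x)) - series (exp_coeff x) N)); last 2 first.
- exact: cvg_cst.
- exact: tail_cvg0 (is_cvg_series_exp_coeff x).
near=> N; apply/andP; split => //.
rewrite etermN !series_horner mulmxE.
rewrite -[1%:M](rmorph1 (horner_mx A)) -rmorphM -rmorphB.
apply: le_trans (hornerB_le _ _ _) (sum_tail _ _ _).
- by near: N; exists 1%N.
- by move=> k; apply: exp_coeff_ge0; rewrite !mulr_ge0.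
- exact: is_cvg_series_exp_coeff.
Unshelve. all: by end_near.
Qed.

Lemma cvg_sumR (I : finType) (f : I -> nat -> R) (a : I -> R) :
  (forall i, f i @ \oo --> a i) -> (fun N => \sum_i f i N) @ \oo --> \sum_i a i.
Proof.
move=> H; elim: (index_enum I) => [|i s IH].
  under eq_cvg do rewrite big_nil.
  by rewrite big_nil; exact: cvg_cst.
under eq_cvg do rewrite big_cons.
by rewrite big_cons; apply: cvgD.
Qed.

Lemma cvg_entry m p i j (f : nat -> 'M[R]_(m, p)) (M : 'M[R]_(m, p)) :
  f @ \oo --> M -> (fun N => f N i j) @ \oo --> M i j.
Proof.
move=> fM.
exact: (@continuous_cvg _ _ _ _ _ f (fun X : 'M[R]_(m, p) => X i j) M (@coord_continuous R m p i j M) fM).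
Qed.

Lemma expmx_unit n (A : 'M[R]_n.+1) t : expmx A t \in unitmx.
Proof.
have c1 := @expmx_cvg n A t; have c2 := @expmx_cvg n (-A) t.
suff : expmx A t *m expmx (-A) t = 1%:M by case/mulmx1_unit.
apply/matrixP => i j.
have e1 := cvg_entry (i:=i) (j:=j) (@prod_cvg1 n A t).
have e2 : (fun N => (series (eterm A t) N *m series (eterm (-A) t) N) i j) @ \oo -->
    (expmx A t *m expmx (-A) t) i j.
  rewrite mxE; under eq_cvg do rewrite mxE.
  apply: cvg_sumR => l; apply: cvgM.
  - exact: (cvg_entry (i:=i) (j:=l) c1).
  - exact: (cvg_entry (i:=l) (j:=j) c2).
move: e2 e1; set F := (fun N => _) @ \oo => e2 e1.
exact: (@cvg_unique _ (@norm_hausdorff _ R^o) F _ _ _ e2 e1).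
Qed.

End B.

Lemma krylov (F : fieldType) n' k (M : 'M[F]_n'.+1) (X : 'M[F]_(n'.+1, k))
  (v : 'rV_n'.+1) :
  (forall i : 'I_n'.+1, v *m (M ^+ i *m X) = 0) ->
  forall p, v *m (horner_mx M p *m X) = 0.
Proof.
move=> H p; set c := char_poly M.
have c0 : c != 0 by rewrite -size_poly_eq0 size_char_poly.
rewrite (Pdiv.Field.divp_eq p c) rmorphD rmorphM /= Cayley_Hamilton mulr0 add0r.
have Hs : (size (p %% c)%R <= n'.+1)%N.
  by rewrite -ltnS -(size_char_poly M) ltn_modpN0.
rewrite (horner_mx_sum M Hs) mulmx_suml mulmx_sumr big1 // => j _.
by rewrite -scalemxAl -scalemxAr H scaler0.
Qed.

Lemma ctrb_full (F : fieldType) n m (Ad : 'M[F]_n) (B1 B2 : 'M[F]_(n,m)) :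
  Ad \in unitmx -> (forall v : 'rV_n, v *m B1 = 0 -> v *m B2 = 0 -> v = 0) ->
  \rank (ctrb_mx Ad (row_mx B1 (Ad *m B2))) = n.
Proof.
case: n Ad B1 B2 => [|n'] Ad B1 B2 UAd Hv.
  by apply/eqP; rewrite -leqn0 rank_leq_row.
set C := ctrb_mx _ _.
have key : forall v : 'rV_n'.+1, v *m C = 0 -> v = 0.
  move=> v vC.
  have H (i : 'I_n'.+1) : v *m (Ad ^+ i *m row_mx B1 (Ad *m B2)) = 0.
    move: vC; rewrite /C /ctrb_mx mul_mxrow -(mxrow0 (q_ := fun _ : 'I_n'.+1 => (m + m)%N)).
    by move=> /eq_mxrowP /(_ i).
  have Hp p : v *m horner_mx Ad p *m B1 = 0 /\ v *m horner_mx Ad p *m Ad *m B2 = 0.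
    have := krylov H p; rewrite mulmxA mul_mx_row => /eqP.
    by rewrite row_mx_eq0 => /andP[/eqP -> /eqP]; rewrite mulmxA => ->.
  apply: Hv; first by have [+ _] := Hp 1; rewrite rmorph1 mulmx1.
  set c := char_poly Ad.
  pose r := \poly_(i < n'.+1) c`_i.+1.
  have cE : c = (c`_0)%:P + r * 'X.
    apply/polyP => i; rewrite coefD coefC coefMX coef_poly.
    case: i => [|i] /=; first by rewrite addr0.
    rewrite add0r; case: ltnP => // ni.
    by rewrite nth_default // size_char_poly.
  have c0 : c`_0 != 0.
    by rewrite char_poly_det mulf_eq0 negb_or signr_eq0 /= -unitfE -unitmxE.
  have := Cayley_Hamilton Ad; rewrite -/c cE rmorphD rmorphM /= horner_mx_C horner_mx_X.
  move=> /eqP; rewrite addr_eq0 => /eqP E.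
  have : c`_0 *: (v *m B2) = 0.
    rewrite scalemxAl -mul_mx_scalar E mulmxN -mulmxE (mulmxA v) (mulNmx (v *m horner_mx Ad r *m Ad)).
    by have [_ ->] := Hp r; rewrite oppr0.
  by move/eqP; rewrite scaler_eq0 (negPf c0) /= => /eqP.
apply/eqP; rewrite -[_ == _]/(row_free C) -kermx_eq0.
apply/eqP/row_matrixP => i; rewrite row0; apply: key.
by rewrite -row_mul mulmx_ker row0.
Qed.

End Helpers.

Theorem mainTheorem2 (R : realType) (n m : nat) (A : 'M[R]_n) (B : 'M[R]_(n, m)) (T : R) :
  controllable A B -> 0 < T ->
  (forall x : 'cV[R]_n,
      (B^T *m (Atilde A T)^T) *m x = 0 -> B^T *m x = 0 -> x = 0) ->
  controllable (expmx A T) (row_mx (Atilde A T *m B) (expmx A T *m B)).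
Proof.
move=> _ _ H; rewrite /controllable.
case: n A B H => [|n'] A B H.
  by apply/eqP; rewrite -leqn0 rank_leq_row.
apply: Helpers.ctrb_full; first exact: Helpers.expmx_unit.
move=> v h1 h2; apply: trmx_inj; rewrite trmx0; apply: H.
  by rewrite -trmx_mul -trmx_mul h1 trmx0.
by rewrite -trmx_mul h2 trmx0.
Qed.
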